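(* Let $g,h:\mathbb{R}\to\mathbb{R}^2$ be free maps, i.e. $g'(t),g''(t)$ are linearly independent for all $t$, and likewise for $h$. Define $F_{gh}:\mathbb{R}^2\to\mathbb{R}^4$ by $F_{gh}(x,y)=(g(x),h(y))$. Then $F_{gh}\in\mathcal{A}_{2,4}$; moreover, for $F_{gh}$ the compatibility condition of the linearized system reduces to $\partial_x h_y+\partial_y h_x=\delta g_{xy}$. In particular $F(x,y)=(x,e^x,y,e^y)$ belongs to $\mathcal{A}_{2,4}$.
   Context: Definition of $\mathcal{A}_{m,q}$ for $q=\frac{m(m+3)}{2}-1$ (here $m=2,q=4$): it is the set of smooth $f:\mathbb{R}^m\to\mathbb{R}^q$ such that (i) at every point $x$ the $\frac{m(m+3)}{2}$ vectors $\partial_\alpha f(x)$, $\partial_{\alpha\beta}f(x)$ ($\alpha\le\beta$) span $\mathbb{R}^q$ (so one may choose smooth, nowhere simultaneously vanishing functions $\lambda^\alpha$, $\lambda^{\alpha\beta}=\lambda^{\beta\alpha}$ with $\sum_\alpha\lambda^\alpha\partial_\alpha f+\sum_{\alpha,\beta}\lambda^{\alpha\beta}\partial_{\alpha\beta}f\equiv0$, unique up to a nowhere-zero factor); and (ii) there is an index $\alpha_0$ such that at every point $\lambda^{\alpha_0 1},\dots,\lambda^{\alpha_0 m}$ are not all zero. The compatibility condition of the system $\sum_i \partial_\alpha f^i\delta f^i=h_\alpha$, $\sum_i \partial_{\alpha\beta} f^i\delta f^i=\tfrac12(\partial_\alpha h_\beta+\partial_\beta h_\alpha-\delta g_{\alpha\beta})$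 is $2\sum_\alpha\lambda^\alpha h_\alpha+\sum_{\alpha,\beta}\lambda^{\alpha\beta}(\partial_\alpha h_\beta+\partial_\beta h_\alpha-\delta g_{\alpha\beta})=0$. *)

(* Defs.v *)
From Stdlib Require Import Reals.
Open Scope R_scope.

Definition is_deriv (f f' : R -> R) : Prop :=
  forall x, derivable_pt_lim f x (f' x).

Definition smooth1 (f : R -> R) : Prop :=
  exists D : nat -> R -> R, D 0%nat = f /\ forall n, is_deriv (D n) (D (S n)).

Definition lin_indep2 (u1 u2 v1 v2 : R) : Prop :=
  forall a b, a * u1 + b * v1 = 0 -> a * u2 + b * v2 = 0 -> a = 0 /\ b = 0.

Definition free_map (g1 g2 : R -> R) : Prop :=
  forall g1' g2' g1'' g2'' : R -> R,
    is_deriv g1 g1' -> is_deriv g1' g1'' ->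
    is_deriv g2 g2' -> is_deriv g2' g2'' ->
    forall t, lin_indep2 (g1' t) (g2' t) (g1'' t) (g2'' t).

Definition cont2 (u : R -> R -> R) : Prop :=
  forall x y eps, 0 < eps -> exists del, 0 < del /\
    forall x' y', Rabs (x' - x) < del -> Rabs (y' - y) < del ->
      Rabs (u x' y' - u x y) < eps.

(** D i j = d^i/dx^i d^j/dy^j of D 0 0: a family of all partial derivatives,
    each jointly continuous. *)
Definition smooth_family (D : nat -> nat -> R -> R -> R) : Prop :=
  forall i j,
    cont2 (D i j) /\
    forall x y,
      derivable_pt_lim (fun t => D i j t y) x (D (S i) j x y) /\
      derivable_pt_lim (fun t => D i j x t) y (D i (S j) x y).

Definition smooth2 (u : R -> R -> R) : Prop :=
  exists D, D 0%nat 0%nat = u /\ smooth_family D.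

(** Vectors of R^4 are [nat -> R] restricted to indices 0..3.
    Given partial-derivative families D k of the components f^k, the linear relation
    l1 f_x + l2 f_y + sum_{a,b} l^{ab} f_{ab} = 0 at (x,y), with l^{12} = l^{21} = l12. *)
Definition rel24 (D : nat -> nat -> nat -> R -> R -> R) (x y l1 l2 l11 l12 l22 : R)
  : Prop :=
  forall k, (k < 4)%nat ->
    l1 * D k 1%nat 0%nat x y + l2 * D k 0%nat 1%nat x y
    + l11 * D k 2%nat 0%nat x y + 2 * l12 * D k 1%nat 1%nat x y
    + l22 * D k 0%nat 2%nat x y = 0.

Definition nonzero5 (a b c d e : R) : Prop :=
  ~ (a = 0 /\ b = 0 /\ c = 0 /\ d = 0 /\ e = 0).

Definition A24 (f : nat -> R -> R -> R) : Prop :=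
  exists D : nat -> nat -> nat -> R -> R -> R,
    (forall k, (k < 4)%nat -> D k 0%nat 0%nat = f k /\ smooth_family (D k)) /\
    (forall x y (v : nat -> R), exists c1 c2 c3 c4 c5,
       forall k, (k < 4)%nat ->
         v k = c1 * D k 1%nat 0%nat x y + c2 * D k 0%nat 1%nat x y
             + c3 * D k 2%nat 0%nat x y + c4 * D k 1%nat 1%nat x y
             + c5 * D k 0%nat 2%nat x y) /\
    (* (ii) exists alpha0 in {1,2} with (l^{alpha0 1}, l^{alpha0 2}) never both zero *)
    ((forall x y l1 l2 l11 l12 l22, rel24 D x y l1 l2 l11 l12 l22 ->
        nonzero5 l1 l2 l11 l12 l22 -> l11 <> 0 \/ l12 <> 0) \/
     (forall x y l1 l2 l11 l12 l22, rel24 D x y l1 l2 l11 l12 l22 ->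
        nonzero5 l1 l2 l11 l12 l22 -> l12 <> 0 \/ l22 <> 0)).

Definition Fgh (g1 g2 h1 h2 : R -> R) : nat -> R -> R -> R :=
  fun k x y => match k with
               | 0%nat => g1 x | 1%nat => g2 x | 2%nat => h1 y | _ => h2 y end.

(** Compatibility expression
    2 sum_a l^a h_a + sum_{a,b} l^{ab} (d_a h_b + d_b h_a - dg_{ab})
    (with l^{12}=l^{21}, dg_{12}=dg_{21}), evaluated at a point. *)
Definition compat (l1 l2 l11 l12 l22 hx hy dxhx dxhy dyhx dyhy dgxx dgxy dgyy : R) : R :=
  2 * (l1 * hx + l2 * hy)
  + l11 * (dxhx + dxhx - dgxx)
  + l12 * (dxhy + dyhx - dgxy) + l12 * (dyhx + dxhy - dgxy)
  + l22 * (dyhy + dyhy - dgyy).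

(* Main.v *)
Require Import Defs.
From Stdlib Require Import Reals Lra Lia FunctionalExtensionality.
Open Scope R_scope.

Lemma cont1 f f' : is_deriv f f' -> forall x eps, 0<eps -> exists del, 0<del /\
  forall x', Rabs (x'-x) < del -> Rabs (f x' - f x) < eps.
Proof.
intros Hf x eps He.
assert (C: continuity_pt f x) by (apply derivable_continuous_pt; exact (exist _ (f' x) (Hf x))).
destruct (C eps He) as [del [Hd H]]. exists del; split; auto. intros x' Hx'.
destruct (Req_dec x' x). subst; rewrite Rminus_diag, Rabs_R0; auto.
apply H. split. split; [exact I| auto]. simpl; unfold R_dist; auto.
Qed.

Definition xfam (u : nat -> R -> R) : nat->nat->R->R->R :=
  fun i j x y => match j with O => u i x | S _ => 0 end.
Definition yfam (u : nat -> R -> R) : nat->nat->R->R->R :=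
  fun i j x y => match i with O => u j y | S _ => 0 end.

Lemma cst0 : forall c x, derivable_pt_lim (fun _ : R => c) x 0.
Proof. intros; apply derivable_pt_lim_const. Qed.

Lemma smooth_xfam u : (forall n, is_deriv (u n) (u (S n))) -> smooth_family (xfam u).
Proof.
intros Hu i j. split.
- intros x y eps He. destruct j as [|j]; simpl.
  + destruct (cont1 _ _ (Hu i) x eps He) as [del [Hd H]]. exists del; split; auto.
  + exists 1; split; [lra|]. intros; rewrite Rminus_diag, Rabs_R0; auto.
- intros x y; destruct j as [|j]; simpl; split; try apply cst0. apply Hu.
Qed.

Lemma smooth_yfam u : (forall n, is_deriv (u n) (u (S n))) -> smooth_family (yfam u).
Proof.
intros Hu i j. split.
- intros x y eps He. destruct i as [|i]; simpl.
  + destruct (cont1 _ _ (Hu j) y eps He) as [del [Hd H]]. exists del; split; auto.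
  + exists 1; split; [lra|]. intros; rewrite Rminus_diag, Rabs_R0; auto.
- intros x y; destruct i as [|i]; simpl; split; try apply cst0. apply Hu.
Qed.

Lemma xonly (E: nat->nat->R->R->R) (u u' u'': R->R) :
  E 0%nat 0%nat = (fun x y => u x) -> smooth_family E -> is_deriv u u' -> is_deriv u' u'' ->
  forall x y, E 1%nat 0%nat x y = u' x /\ E 0%nat 1%nat x y = 0 /\ E 2%nat 0%nat x y = u'' x
   /\ E 1%nat 1%nat x y = 0 /\ E 0%nat 2%nat x y = 0.
Proof.
intros H0 HE Hu Hu'.
assert (A: forall x y, E 1%nat 0%nat x y = u' x /\ E 0%nat 1%nat x y = 0).
{ intros x y. destruct (HE 0%nat 0%nat) as [_ Hd]. destruct (Hd x y) as [Dx Dy].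
  rewrite H0 in Dx, Dy. split.
  - eapply uniqueness_limite; [exact Dx| apply Hu].
  - eapply uniqueness_limite; [exact Dy| apply cst0]. }
intros x y. destruct (A x y) as [A1 A2]. repeat split; auto.
- destruct (HE 1%nat 0%nat) as [_ Hd]. destruct (Hd x y) as [Dx _].
  assert (Ef: (fun t => E 1%nat 0%nat t y) = u') by (extensionality t; apply A).
  rewrite Ef in Dx. eapply uniqueness_limite; [exact Dx| apply Hu'].
- destruct (HE 1%nat 0%nat) as [_ Hd]. destruct (Hd x y) as [_ Dy].
  assert (Ef: (fun t => E 1%nat 0%nat x t) = fun _ => u' x) by (extensionality t; apply A).
  rewrite Ef in Dy. eapply uniqueness_limite; [exact Dy| apply cst0].
- destruct (HE 0%nat 1%nat) as [_ Hd]. destruct (Hd x y) as [_ Dy].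
  assert (Ef: (fun t => E 0%nat 1%nat x t) = fun _ => 0) by (extensionality t; apply A).
  rewrite Ef in Dy. eapply uniqueness_limite; [exact Dy| apply cst0].
Qed.

Lemma yonly (E: nat->nat->R->R->R) (u u' u'': R->R) :
  E 0%nat 0%nat = (fun x y => u y) -> smooth_family E -> is_deriv u u' -> is_deriv u' u'' ->
  forall x y, E 1%nat 0%nat x y = 0 /\ E 0%nat 1%nat x y = u' y /\ E 2%nat 0%nat x y = 0
   /\ E 1%nat 1%nat x y = 0 /\ E 0%nat 2%nat x y = u'' y.
Proof.
intros H0 HE Hu Hu'.
assert (A: forall x y, E 1%nat 0%nat x y = 0 /\ E 0%nat 1%nat x y = u' y).
{ intros x y. destruct (HE 0%nat 0%nat) as [_ Hd]. destruct (Hd x y) as [Dx Dy].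
  rewrite H0 in Dx, Dy. split.
  - eapply uniqueness_limite; [exact Dx| apply cst0].
  - eapply uniqueness_limite; [exact Dy| apply Hu]. }
intros x y. destruct (A x y) as [A1 A2]. repeat split; auto.
- destruct (HE 1%nat 0%nat) as [_ Hd]. destruct (Hd x y) as [Dx _].
  assert (Ef: (fun t => E 1%nat 0%nat t y) = fun _ => 0) by (extensionality t; apply A).
  rewrite Ef in Dx. eapply uniqueness_limite; [exact Dx| apply cst0].
- destruct (HE 0%nat 1%nat) as [_ Hd]. destruct (Hd x y) as [Dx _].
  assert (Ef: (fun t => E 0%nat 1%nat t y) = fun _ => u' y) by (extensionality t; apply A).
  rewrite Ef in Dx. eapply uniqueness_limite; [exact Dx| apply cst0].
- destruct (HE 0%nat 1%nat) as [_ Hd]. destruct (Hd x y) as [_ Dy].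
  assert (Ef: (fun t => E 0%nat 1%nat x t) = u') by (extensionality t; apply A).
  rewrite Ef in Dy. eapply uniqueness_limite; [exact Dy| apply Hu'].
Qed.

Lemma indep_det u1 u2 v1 v2 : lin_indep2 u1 u2 v1 v2 -> u1*v2 - u2*v1 <> 0.
Proof.
intros H Hd.
destruct (Req_dec u1 0) as [Hu|Hu]; destruct (Req_dec v1 0) as [Hv|Hv].
- destruct (H v2 (-u2)) as [E1 E2]; try (subst; ring).
  assert (u2 = 0) by lra. destruct (H 1 0) as [E3 _]; try (subst; ring). lra.
- destruct (H v1 (-u1)) as [E1 E2]; [ring| lra | lra].
- destruct (H v1 (-u1)) as [E1 E2]; [ring| lra | lra].
- destruct (H v1 (-u1)) as [E1 E2]; [ring| lra | lra].
Qed.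

Lemma core g1 g2 h1 h2 g1' g1'' g2' g2'' h1' h1'' h2' h2'' (D : nat -> nat -> nat -> R -> R -> R) :
  is_deriv g1 g1' -> is_deriv g1' g1'' -> is_deriv g2 g2' -> is_deriv g2' g2'' ->
  is_deriv h1 h1' -> is_deriv h1' h1'' -> is_deriv h2 h2' -> is_deriv h2' h2'' ->
  (forall k, (k < 4)%nat -> D k 0%nat 0%nat = Fgh g1 g2 h1 h2 k /\ smooth_family (D k)) ->
  (forall t, lin_indep2 (g1' t) (g2' t) (g1'' t) (g2'' t)) ->
  (forall t, lin_indep2 (h1' t) (h2' t) (h1'' t) (h2'' t)) ->
  (forall x y (v : nat -> R), exists c1 c2 c3 c4 c5,
       forall k, (k < 4)%nat ->
         v k = c1 * D k 1%nat 0%nat x y + c2 * D k 0%nat 1%nat x y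
             + c3 * D k 2%nat 0%nat x y + c4 * D k 1%nat 1%nat x y
             + c5 * D k 0%nat 2%nat x y) /\
  (forall x y l1 l2 l11 l12 l22, rel24 D x y l1 l2 l11 l12 l22 ->
     l1 = 0 /\ l2 = 0 /\ l11 = 0 /\ l22 = 0).
Proof.
intros a1 a2 b1 b2 c1 c2 d1 d2 HD Ig Ih.
destruct (HD 0%nat ltac:(lia)) as [E0 S0].
destruct (HD 1%nat ltac:(lia)) as [E1 S1].
destruct (HD 2%nat ltac:(lia)) as [E2 S2].
destruct (HD 3%nat ltac:(lia)) as [E3 S3].
pose proof (xonly _ _ _ _ E0 S0 a1 a2) as V0.
pose proof (xonly _ _ _ _ E1 S1 b1 b2) as V1.
pose proof (yonly _ _ _ _ E2 S2 c1 c2) as V2.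
pose proof (yonly _ _ _ _ E3 S3 d1 d2) as V3.
split.
- intros x y v.
  destruct (V0 x y) as [p1 [p2 [p3 [p4 p5]]]].
  destruct (V1 x y) as [q1 [q2 [q3 [q4 q5]]]].
  destruct (V2 x y) as [r1 [r2 [r3 [r4 r5]]]].
  destruct (V3 x y) as [s1 [s2 [s3 [s4 s5]]]].
  pose proof (indep_det _ _ _ _ (Ig x)) as dg.
  pose proof (indep_det _ _ _ _ (Ih y)) as dh.
  set (G := g1' x * g2'' x - g2' x * g1'' x) in *.
  set (H := h1' y * h2'' y - h2' y * h1'' y) in *.
  exists ((v 0%nat * g2'' x - v 1%nat * g1'' x) / G),
         ((v 2%nat * h2'' y - v 3%nat * h1'' y) / H),
         ((g1' x * v 1%nat - g2' x * v 0%nat) / G), 0,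
         ((h1' y * v 3%nat - h2' y * v 2%nat) / H).
  intros k Hk. destruct k as [|[|[|[|k]]]]; try lia.
  + rewrite p1, p2, p3, p4, p5. unfold G, H in *; field; try split; auto.
  + rewrite q1, q2, q3, q4, q5. unfold G, H in *; field; try split; auto.
  + rewrite r1, r2, r3, r4, r5. unfold G, H in *; field; try split; auto.
  + rewrite s1, s2, s3, s4, s5. unfold G, H in *; field; try split; auto.
- intros x y l1 l2 l11 l12 l22 Hr.
  destruct (V0 x y) as [p1 [p2 [p3 [p4 p5]]]].
  destruct (V1 x y) as [q1 [q2 [q3 [q4 q5]]]].
  destruct (V2 x y) as [r1 [r2 [r3 [r4 r5]]]].
  destruct (V3 x y) as [s1 [s2 [s3 [s4 s5]]]].
  pose proof (Hr 0%nat ltac:(lia)) as R0.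
  pose proof (Hr 1%nat ltac:(lia)) as R1.
  pose proof (Hr 2%nat ltac:(lia)) as R2.
  pose proof (Hr 3%nat ltac:(lia)) as R3.
  rewrite p1, p2, p3, p4, p5 in R0. rewrite q1, q2, q3, q4, q5 in R1.
  rewrite r1, r2, r3, r4, r5 in R2. rewrite s1, s2, s3, s4, s5 in R3.
  destruct (Ig x l1 l11) as [A B]; try lra.
  destruct (Ih y l2 l22) as [C E]; try lra.
Qed.

Definition Dfam (G1 G2 H1 H2 : nat -> R -> R) : nat -> nat -> nat -> R -> R -> R :=
  fun k => match k with 0%nat => xfam G1 | 1%nat => xfam G2 | 2%nat => yfam H1 | _ => yfam H2 end.

Lemma part1 : forall g1 g2 h1 h2 : R -> R,
    smooth1 g1 -> smooth1 g2 -> smooth1 h1 -> smooth1 h2 ->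
    free_map g1 g2 -> free_map h1 h2 ->
    A24 (Fgh g1 g2 h1 h2) /\
    (forall D : nat -> nat -> nat -> R -> R -> R,
      (forall k, (k < 4)%nat ->
         D k 0%nat 0%nat = Fgh g1 g2 h1 h2 k /\ smooth_family (D k)) ->
      forall l1 l2 l11 l12 l22 : R -> R -> R,
      smooth2 l1 -> smooth2 l2 -> smooth2 l11 -> smooth2 l12 -> smooth2 l22 ->
      (forall x y, rel24 D x y (l1 x y) (l2 x y) (l11 x y) (l12 x y) (l22 x y)) ->
      (forall x y, nonzero5 (l1 x y) (l2 x y) (l11 x y) (l12 x y) (l22 x y)) ->
      forall hx hy dxhx dxhy dyhx dyhy dgxx dgxy dgyy : R -> R -> R,
      (forall x y,
         derivable_pt_lim (fun t => hx t y) x (dxhx x y) /\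
         derivable_pt_lim (fun t => hy t y) x (dxhy x y) /\
         derivable_pt_lim (fun t => hx x t) y (dyhx x y) /\
         derivable_pt_lim (fun t => hy x t) y (dyhy x y)) ->
      forall x y,
        compat (l1 x y) (l2 x y) (l11 x y) (l12 x y) (l22 x y)
               (hx x y) (hy x y) (dxhx x y) (dxhy x y) (dyhx x y) (dyhy x y)
               (dgxx x y) (dgxy x y) (dgyy x y) = 0
        <-> dxhy x y + dyhx x y = dgxy x y).
Proof.
intros g1 g2 h1 h2 [G1 [G10 G1d]] [G2 [G20 G2d]] [H1 [H10 H1d]] [H2 [H20 H2d]] Fg Fh.
subst g1 g2 h1 h2.
pose proof (Fg _ _ _ _ (G1d 0%nat) (G1d 1%nat) (G2d 0%nat) (G2d 1%nat)) as Ig.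
pose proof (Fh _ _ _ _ (H1d 0%nat) (H1d 1%nat) (H2d 0%nat) (H2d 1%nat)) as Ih.
pose proof (fun D HD => core _ _ _ _ _ _ _ _ _ _ _ _ D (G1d 0%nat) (G1d 1%nat) (G2d 0%nat) (G2d 1%nat)
   (H1d 0%nat) (H1d 1%nat) (H2d 0%nat) (H2d 1%nat) HD Ig Ih) as C.
split.
- exists (Dfam G1 G2 H1 H2).
  assert (HD : forall k, (k < 4)%nat -> Dfam G1 G2 H1 H2 k 0%nat 0%nat = Fgh (G1 0%nat) (G2 0%nat) (H1 0%nat) (H2 0%nat) k
     /\ smooth_family (Dfam G1 G2 H1 H2 k)).
  { intros k Hk. destruct k as [|[|[|[|k]]]]; try lia; split; try reflexivity;
    simpl; (apply smooth_xfam || apply smooth_yfam); assumption. }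
  destruct (C _ HD) as [Sp Rz].
  split; [exact HD| split; [exact Sp|]].
  left. intros x y l1 l2 l11 l12 l22 Hr Hnz. right. intro E.
  destruct (Rz _ _ _ _ _ _ _ Hr) as [? [? [? ?]]]. apply Hnz; tauto.
- intros D HD l1 l2 l11 l12 l22 _ _ _ _ _ Hrel Hnz hx hy dxhx dxhy dyhx dyhy dgxx dgxy dgyy _ x y.
  destruct (C _ HD) as [_ Rz].
  destruct (Rz _ _ _ _ _ _ _ (Hrel x y)) as [z1 [z2 [z3 z4]]].
  assert (N : l12 x y <> 0) by (intro E; apply (Hnz x y); tauto).
  assert (Eq : compat (l1 x y) (l2 x y) (l11 x y) (l12 x y) (l22 x y)
               (hx x y) (hy x y) (dxhx x y) (dxhy x y) (dyhx x y) (dyhy x y)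
               (dgxx x y) (dgxy x y) (dgyy x y) = 2 * l12 x y * (dxhy x y + dyhx x y - dgxy x y))
    by (unfold compat; rewrite z1, z2, z3, z4; ring).
  rewrite Eq. split.
  + intro E. apply Rmult_integral in E. destruct E as [E|E]; [|lra].
    apply Rmult_integral in E; destruct E; lra.
  + intro E. replace (dxhy x y + dyhx x y - dgxy x y) with 0 by lra. ring.
Qed.

Lemma smooth_id : smooth1 (fun x => x).
Proof.
exists (fun n => match n with 0%nat => fun x => x | 1%nat => fun _ => 1 | _ => fun _ => 0 end).
split; [reflexivity|]. intros n x. destruct n as [|[|n]]; simpl.
- apply derivable_pt_lim_id.
- apply derivable_pt_lim_const.
- apply derivable_pt_lim_const.
Qed.

Lemma smooth_exp : smooth1 exp.
Proof. exists (fun _ => exp); split; [reflexivity|]. intros n x; apply derivable_pt_lim_exp. Qed.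

Lemma free_idexp : free_map (fun x => x) exp.
Proof.
intros a c b d Ha Hb Hc Hd t.
assert (A : forall s, a s = 1) by (intro s; eapply uniqueness_limite; [apply Ha| apply derivable_pt_lim_id]).
assert (Ea : a = fun _ => 1) by (extensionality s; apply A).
assert (B : b t = 0) by (eapply uniqueness_limite; [apply Hb| rewrite Ea; apply derivable_pt_lim_const]).
assert (Cc : forall s, c s = exp s) by (intro s; eapply uniqueness_limite; [apply Hc| apply derivable_pt_lim_exp]).
assert (Ec : c = exp) by (extensionality s; apply Cc).
assert (Dd : d t = exp t) by (eapply uniqueness_limite; [apply Hd| rewrite Ec; apply derivable_pt_lim_exp]).
intros p q E1 E2. rewrite A, B in E1. rewrite Cc, Dd in E2. pose proof (exp_pos t).
assert (p = 0) by lra. subst p. split; [reflexivity|]. nra.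
Qed.

Theorem mainTheorem2 :
  (forall g1 g2 h1 h2 : R -> R,
    smooth1 g1 -> smooth1 g2 -> smooth1 h1 -> smooth1 h2 ->
    free_map g1 g2 -> free_map h1 h2 ->
    A24 (Fgh g1 g2 h1 h2) /\
    (forall D : nat -> nat -> nat -> R -> R -> R,
      (forall k, (k < 4)%nat ->
         D k 0%nat 0%nat = Fgh g1 g2 h1 h2 k /\ smooth_family (D k)) ->
      forall l1 l2 l11 l12 l22 : R -> R -> R,
      smooth2 l1 -> smooth2 l2 -> smooth2 l11 -> smooth2 l12 -> smooth2 l22 ->
      (forall x y, rel24 D x y (l1 x y) (l2 x y) (l11 x y) (l12 x y) (l22 x y)) ->
      (forall x y, nonzero5 (l1 x y) (l2 x y) (l11 x y) (l12 x y) (l22 x y)) ->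
      forall hx hy dxhx dxhy dyhx dyhy dgxx dgxy dgyy : R -> R -> R,
      (forall x y,
         derivable_pt_lim (fun t => hx t y) x (dxhx x y) /\
         derivable_pt_lim (fun t => hy t y) x (dxhy x y) /\
         derivable_pt_lim (fun t => hx x t) y (dyhx x y) /\
         derivable_pt_lim (fun t => hy x t) y (dyhy x y)) ->
      forall x y,
        compat (l1 x y) (l2 x y) (l11 x y) (l12 x y) (l22 x y)
               (hx x y) (hy x y) (dxhx x y) (dxhy x y) (dyhx x y) (dyhy x y)
               (dgxx x y) (dgxy x y) (dgyy x y) = 0
        <-> dxhy x y + dyhx x y = dgxy x y)) /\
  A24 (Fgh (fun x => x) exp (fun y => y) exp).
Proof.
split.
- exact part1.
- apply part1; first [apply smooth_id | apply smooth_exp | apply free_idexp].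
Qed.
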